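(* Consider any instance of the budgeted matching-market pricing problem (defined in the context) in which every buyer $i$ satisfies $b_i\ge v_i$, and run Algorithm 1 (described in the context). If buyer $i$ obtains her bundle $X_i$ at price per item $\bar p_i$, then every item that the algorithm assigns (to any buyer) at a price $p'<\bar p_i$ is not in $S_i$.
   Context: Instance: a finite set $I$ of $n$ buyers and a finite set $J$ of $m$ distinct items. Each buyer $i$ has a preference set $S_i\subseteq J$, a value $v_i>0$ for each item of $S_i$ (value $0$ for items outside $S_i$), and a budget $b_i\ge 0$. An outcome $\langle\mathbf{X},\mathbf{p}\rangle$ consists of pairwise disjoint bundles $X_i\subseteq J$ and payments $p_i\ge 0$. Algorithm 1 (ascending price auction). Throughout, $b_i$ denotes buyer $i$'s remaining budget (initially her budget, decreased by each payment), $J$ denotes the set of currently unsold items, and $\epsilon>0$ is an arbitrarily small price increment. For a price $p>0$, the demand of buyer $i$ is $D_i(p)=\min\{\lfloor b_i/p\rfloor,|S_i|\}$ if $p\le v_i$ and $D_i(p)=0$ if $p>v_i$. Let $A^p=\{i: v_i>p, D_i(p)>0\}$, $Q^p=\{i: v_i=p, D_i(p)>0\}$, $I^p=A^p\cup Q^p$. $G^p$ is the bipartite graph on $I^p\cup J$ with an edge $(i,j)$ iff $j\in S_i$, and $\bar G^p$ is its subgraph on $A^p\cup J$. A $B$-matching of $G^p$ (or $\bar G^p$) is a set of its edges in which every buyer $i$ lies in at most $D_i(p)$ edges and every item in at most one edge; $\mathcal{M}(G^p)$ denotes a maximum one. Given a $B$-matching $\mathcal{M}$, an augmenting path from buyer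 $i$ to item $j$ is a sequence $i=y_1,z_1,y_2,z_2,\dots,y_h,z_h=j$ of buyers $y_k$ and items $z_k$ with $z_k\in S_{y_k}$, $(y_k,z_k)\notin\mathcal{M}$ for all $k$, and $(z_k,y_{k+1})\in\mathcal{M}$ for $k<h$. ''Giving item $j$ to buyer $i$ at price $q$'' means: remove $j$ from $J$, add $j$ to $X_i$, increase $p_i$ by $q$ and decrease $b_i$ by $q$. Start with $p=0$, $X_i=\emptyset$, $p_i=0$. While a maximum $B$-matching of $G^p$ is nonempty: increase $p$ until $|\mathcal{M}(G^p)|>|\mathcal{M}(G^{p+\epsilon})|$ (a critical price). If $|\mathcal{M}(G^p)|>|\mathcal{M}(\bar G^p)|$, run Procedure I: let $J_Q=\bigcup_{i\in Q^p}S_i$; compute a maximum $B$-matching $\mathcal{M}$ of $\bar G^p$ that matches the minimum number of items of $J_Q$; let $\bar J$ be the items of $J$ unmatched in $\mathcal{M}$ and $N(\bar J)$ the buyers having an augmenting path w.r.t. $\mathcal{M}$ to some item of $\bar J$; give each item $j$ with $(i,j)\in\mathcal{M}$, $i\in N(\bar J)$, to $i$ at price $p$; and assign the items of $\bar J$ to buyers in $Q^p$ (respecting supply and budget constraints), each at price $p$. Otherwise run Procedure II: compute a maximum $B$-matching $\mathcal{M}$ of $G^{p+\epsilon}$; let $\bar J$ be the items unmatched in it and $N(\bar J)$ the buyers having an augmenting path to an item of $\bar J$; give each item $j$ with $(i,j)\in\mathcal{M}$, $i\in N(\bar J)$, to $i$ at price $p+\epsilon$; remove $\bar J$ from $J$;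 and remove all items no longer demanded by any buyer. *)

(* Defs.v *)
(* Formalization of Algorithm 1 (ascending price auction)
   for the budgeted matching-market pricing problem, as a relational
   (nondeterministic) transition system. *)
From mathcomp Require Import all_boot all_order all_algebra.
Set Implicit Arguments. Unset Strict Implicit. Unset Printing Implicit Defensive.
Import Order.TTheory GRing.Theory Num.Theory.
Local Open Scope ring_scope.

(* A state of the algorithm:
   - rem  : the set J of currently unsold (and not removed) items;
   - sold : for each item, None if not (yet) given to anybody, or
            Some (i, q) if it was given to buyer i at price q;
   - pr   : the current value of the price variable p. *)
Record state (R : realFieldType) (I J : finType) := St {
  rem : {set J};
  sold : J -> option (I * R);
  pr : R }.

Section Auction.

Definition init (R : realFieldType) (I J : finType) : state R I J :=
  @St R I J setT (fun _ => None) 0.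

Definition paid (R : realFieldType) (I J : finType) (st : state R I J) (i : I) : R :=
  \sum_(j : J) match sold st j with
               | Some (i', q) => if i' == i then q else 0
               | None => 0 end.

Definition bud (R : realFieldType) (I J : finType) (b : I -> R)
  (st : state R I J) (i : I) : R := b i - paid st i.

(* demand D_i(q) = min (floor (b_i / q), |S_i|) if q <= v_i, 0 otherwise;
   floor (b_i/q) is written as the largest k with k * q <= b_i. *)
Definition dem (R : realFieldType) (I J : finType) (S : I -> {set J})
  (v b : I -> R) (st : state R I J) (q : R) (i : I) : nat :=
  if q <= v i then \max_(k < #|S i|.+1 | (k : nat)%:R * q <= bud b st i) (k : nat)
  else 0%N.

Definition Aset (R : realFieldType) (I J : finType) (S : I -> {set J})
  (v b : I -> R) (st : state R I J) (q : R) : {set I} :=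
  [set i | (q < v i) && (0 < dem S v b st q i)%N].
Definition Qset (R : realFieldType) (I J : finType) (S : I -> {set J})
  (v b : I -> R) (st : state R I J) (q : R) : {set I} :=
  [set i | (v i == q) && (0 < dem S v b st q i)%N].
Definition Iset (R : realFieldType) (I J : finType) (S : I -> {set J})
  (v b : I -> R) (st : state R I J) (q : R) : {set I} :=
  Aset S v b st q :|: Qset S v b st q.

(* M is a B-matching of the bipartite graph on buyers Bs and items Js
   (edge (i,j) iff j \in S i), buyer i having capacity d i. *)
Definition bmatch (I J : finType) (S : I -> {set J}) (Bs : {set I}) (Js : {set J})
  (d : I -> nat) (M : {set I * J}) : bool :=
  [&& [forall x in M, [&& x.1 \in Bs, x.2 \in Js & x.2 \in S x.1]],
      [forall i, #|[set x in M | x.1 == i]| <= d i]%N &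
      [forall j, #|[set x in M | x.2 == j]| <= 1]%N].

Definition maxbm (I J : finType) (S : I -> {set J}) (Bs : {set I}) (Js : {set J})
  (d : I -> nat) (M : {set I * J}) : Prop :=
  bmatch S Bs Js d M /\ forall M', bmatch S Bs Js d M' -> (#|M'| <= #|M|)%N.

Definition msize (I J : finType) (S : I -> {set J}) (Bs : {set I}) (Js : {set J})
  (d : I -> nat) : nat :=
  \max_(M : {set I * J} | bmatch S Bs Js d M) #|M|.

Definition fG (R : realFieldType) (I J : finType) (S : I -> {set J})
  (v b : I -> R) (st : state R I J) (q : R) : nat :=
  msize S (Iset S v b st q) (rem st) (dem S v b st q).
Definition fGbar (R : realFieldType) (I J : finType) (S : I -> {set J})
  (v b : I -> R) (st : state R I J) (q : R) : nat :=
  msize S (Aset S v b st q) (rem st) (dem S v b st q).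

Definition matched (I J : finType) (M : {set I * J}) : {set J} :=
  [set x.2 | x in M].

(* augmenting path from buyer i to item j w.r.t. M in the graph on Bs, Js:
   the sequence of pairs (y_1,z_1) :: ... :: (y_h,z_h) *)
Definition augpath (I J : finType) (S : I -> {set J}) (Bs : {set I}) (Js : {set J})
  (M : {set I * J}) (i : I) (j : J) : Prop :=
  exists (x : I * J) (s : seq (I * J)),
    [/\ x.1 = i, (last x s).2 = j,
        all (fun y : I * J => [&& y.1 \in Bs, y.2 \in Js, y.2 \in S y.1 & y \notin M])
            (x :: s)
      & path (fun y y' : I * J => (y'.1, y.2) \in M) x s].

Definition crit (R : realFieldType) (I J : finType) (S : I -> {set J})
  (v b : I -> R) (st : state R I J) (p : R) : Prop :=
  [/\ pr st <= p,
      forall q, pr st <= q <= p -> fG S v b st q = fG S v b st (pr st)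
    & forall q, p < q -> (fG S v b st q < fG S v b st p)%N].

Definition procI (R : realFieldType) (I J : finType) (S : I -> {set J})
  (v b : I -> R) (st : state R I J) (p : R) (st' : state R I J) : Prop :=
  let A := Aset S v b st p in
  let Q := Qset S v b st p in
  let d := dem S v b st p in
  let JQ := \bigcup_(i in Q) S i in
  (fGbar S v b st p < fG S v b st p)%N /\
  exists (M MQ : {set I * J}),
    let Jbar := rem st :\: matched M in
    let N := fun i : I => exists2 j0, j0 \in Jbar & augpath S A (rem st) M i j0 in
    [/\ maxbm S A (rem st) d M,
        (forall M', maxbm S A (rem st) d M' ->
           (#|matched M :&: JQ| <= #|matched M' :&: JQ|)%N),
        maxbm S Q Jbar d MQ,
        [/\ forall i j, (i, j) \in M -> N i -> sold st' j = Some (i, p),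
            forall i j, (i, j) \in MQ -> sold st' j = Some (i, p)
          & forall j, (forall i, (i, j) \in M -> ~ N i) ->
                      (forall i, (i, j) \notin MQ) -> sold st' j = sold st j]
      & rem st' = [set j in rem st | sold st' j == None] /\ pr st' = p].

Definition procII (R : realFieldType) (I J : finType) (S : I -> {set J})
  (v b : I -> R) (e : R) (st : state R I J) (p : R) (st' : state R I J) : Prop :=
  let Ie := Iset S v b st (p + e) in
  let d := dem S v b st (p + e) in
  ~~ (fGbar S v b st p < fG S v b st p)%N /\
  exists M : {set I * J},
    let Jbar := rem st :\: matched M in
    let N := fun i : I => exists2 j0, j0 \in Jbar & augpath S Ie (rem st) M i j0 in
    [/\ maxbm S Ie (rem st) d M,
        forall i j, (i, j) \in M -> N i -> sold st' j = Some (i, p + e),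
        forall j, (forall i, (i, j) \in M -> ~ N i) -> sold st' j = sold st j,
        rem st' = [set j in rem st | [&& sold st' j == None, j \notin Jbar &
                     [exists i, (j \in S i) && (0 < dem S v b st' (p + e) i)%N]]]
      & pr st' = p].

Definition step (R : realFieldType) (I J : finType) (S : I -> {set J})
  (v b : I -> R) (e : R) (st st' : state R I J) : Prop :=
  (0 < fG S v b st (pr st))%N /\
  exists p, crit S v b st p /\ (procI S v b st p st' \/ procII S v b e st p st').

Definition final (R : realFieldType) (I J : finType) (S : I -> {set J})
  (v b : I -> R) (st : state R I J) : Prop :=
  fG S v b st (pr st) = 0%N.

Inductive run (R : realFieldType) (I J : finType) (S : I -> {set J})
  (v b : I -> R) (e : R) : state R I J -> state R I J -> Prop :=
| run0 st : run S v b e st st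
| runS st1 st2 st3 : step S v b e st1 st2 -> run S v b e st2 st3 -> run S v b e st1 st3.

End Auction.

(* Main.v *)
Require Import Defs.
From mathcomp Require Import all_boot all_order all_algebra.
From Stdlib Require Import Classical.
From mathcomp Require Import zify.
Import Order.TTheory GRing.Theory Num.Theory.
Local Notation rem := Defs.rem.
Set Implicit Arguments. Unset Strict Implicit. Unset Printing Implicit Defensive.

Lemma card_swap (T : finType) (M : {set T}) (a b : T) (P : pred T) :
  a \in M -> b \notin M ->
  (#|[set z in b |: (M :\ a) | P z]| + P a = #|[set z in M | P z]| + P b)%N.
Proof.
move=> aM bM.
have ab : a != b by apply: contraNneq bM => <-.
case Pb: (P b).
  have -> : [set z in b |: (M :\ a) | P z] = b |: ([set z in M | P z] :\ a).
    apply/setP=> z; rewrite !inE; case: (z =P b) => [->|_] /=; [exact: Pb| by rewrite andbA].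
  have hb : b \notin [set z in M | P z] :\ a by rewrite !inE (negbTE bM) andbF.
  have ha : (a \in [set z in M | P z]) = P a by rewrite inE aM.
  rewrite cardsU1 hb (cardsD1 a [set z in M | P z]) ha /=; lia.
have -> : [set z in b |: (M :\ a) | P z] = ([set z in M | P z] :\ a).
  apply/setP=> z; rewrite !inE; case: (z =P b) => [->|_] /=; [by rewrite Pb !andbF | by rewrite andbA].
have ha : (a \in [set z in M | P z]) = P a by rewrite inE aM.
by rewrite [in RHS](cardsD1 a) ha /=; lia.
Qed.

Lemma bmatchP (I J : finType) (S : I -> {set J}) Bs Js (d : I -> nat) (M : {set I * J}) :
  bmatch S Bs Js d M <->
  [/\ forall x, x \in M -> [/\ x.1 \in Bs, x.2 \in Js & x.2 \in S x.1],
      forall i, (#|[set x in M | x.1 == i]| <= d i)%N &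
      forall j, (#|[set x in M | x.2 == j]| <= 1)%N].
Proof.
rewrite /bmatch; split.
  case/and3P=> /forall_inP H1 /forallP H2 /forallP H3; split=> //.
  by move=> x /H1 /and3P.
case=> H1 H2 H3; apply/and3P; split; apply/forallP=> //.
by move=> x; apply/implyP=> /H1 [-> -> ->].
Qed.

Lemma bm_inj (I J : finType) (S : I -> {set J}) Bs Js (d : I -> nat) (M : {set I * J}) :
  bmatch S Bs Js d M -> {in M &, injective (fun x : I * J => x.2)}.
Proof.
case/bmatchP=> _ _ H3 x y xM yM exy.
move/card_le1_eqP: (H3 x.2) => H.
apply: H; by rewrite !inE ?xM ?yM ?exy eqxx.
Qed.

Lemma bm_card (I J : finType) (S : I -> {set J}) Bs Js (d : I -> nat) (M : {set I * J}) :
  bmatch S Bs Js d M -> #|M| = #|matched M|.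
Proof. by move=> H; rewrite /matched card_in_imset //; apply: bm_inj H. Qed.

Lemma bm_le (I J : finType) (S : I -> {set J}) Bs Js (d : I -> nat) (M : {set I * J}) :
  bmatch S Bs Js d M -> (#|M| <= #|Js|)%N.
Proof.
move=> H; rewrite (bm_card H); apply: subset_leq_card; apply/subsetP=> j.
case/imsetP=> x xM ->; case/bmatchP: H => H1 _ _; by case: (H1 x xM).
Qed.

Lemma card_add (T : finType) (M : {set T}) (b : T) (P : pred T) :
  b \notin M -> #|[set z in b |: M | P z]| = (P b + #|[set z in M | P z]|)%N.
Proof.
move=> bM; case Pb: (P b).
  have -> : [set z in b |: M | P z] = b |: [set z in M | P z].
    apply/setP=> z; rewrite !inE; case: (z =P b) => [->|_] /=; by rewrite ?Pb.
  by rewrite cardsU1 inE (negbTE bM).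
rewrite /= add0n; apply: eq_card => z; rewrite !inE; case: (z =P b) => [->|_] /=; by rewrite ?Pb ?andbF.
Qed.

Lemma add_edge (I J : finType) (S : I -> {set J}) Bs Js (d : I -> nat) (M : {set I * J}) x :
  bmatch S Bs Js d M -> x.1 \in Bs -> x.2 \in Js -> x.2 \in S x.1 ->
  x.2 \notin matched M -> (#|[set y in M | y.1 == x.1]| < d x.1)%N ->
  exists M', bmatch S Bs Js d M' /\ #|M'| = #|M|.+1.
Proof.
move=> bm x1 x2 x3 xm xd.
have xM : x \notin M by apply: contra xm => xM; apply/imsetP; exists x.
case/bmatchP: (bm) => H1 H2 H3.
exists (x |: M); split; last by rewrite cardsU1 xM.
apply/bmatchP; split.
- move=> y; rewrite !inE; case/orP => [/eqP ->|/H1] //.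
- move=> i; rewrite (card_add (fun y : I * J => y.1 == i) xM).
  case: (x.1 =P i) => [<-|_] /=; last exact: H2.
  by rewrite add1n.
- move=> j; rewrite (card_add (fun y : I * J => y.2 == j) xM).
  case: (x.2 =P j) => [<-|_] /=; last exact: H3.
  suff -> : [set y in M | y.2 == x.2] = set0 by rewrite cards0.
  apply/setP=> y; rewrite !inE; apply/negP=> /andP[yM /eqP yx].
  by move/negP: xm; apply; apply/imsetP; exists y.
Qed.

Lemma aug_grow (I J : finType) (S : I -> {set J}) Bs Js (d : I -> nat) n :
  forall (M : {set I * J}) (x : I * J) (s : seq (I * J)),
  (size s <= n)%N -> bmatch S Bs Js d M ->
  all (fun y : I * J => [&& y.1 \in Bs, y.2 \in Js, y.2 \in S y.1 & y \notin M]) (x :: s) ->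
  path (fun y y' : I * J => (y'.1, y.2) \in M) x s ->
  (last x s).2 \notin matched M ->
  (#|[set y in M | y.1 == x.1]| < d x.1)%N ->
  exists M', bmatch S Bs Js d M' /\ #|M'| = #|M|.+1.
Proof.
elim: n => [|n IH] M x s.
  case: s => // _ bm /= /andP[/and4P[x1 x2 x3 _] _] _ xm xd.
  exact: add_edge bm x1 x2 x3 xm xd.
case: s => [|y s'] hs bm hall hpath hl hd.
  case/andP: hall => /and4P[x1 x2 x3 _] _.
  exact: add_edge bm x1 x2 x3 hl hd.
case H: (has (fun z : I * J => z.2 == x.2) (y :: s')).
  case/hasP: H => z zin /eqP zx.
  move: hs hall hpath hl; case/splitPr: zin => s1 s2 hs hall hpath hl.
  have hl2 : (last x s2).2 = (last z s2).2 by case: s2 {hs hall hpath hl} => //=.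
  apply: (IH M x s2) => //.
  - by rewrite size_cat /= in hs; lia.
  - move: hall; rewrite /= all_cat /= => /andP[-> /andP[_ /andP[_ ->]]]; by [].
  - move: hpath; rewrite cat_path /= => /and3P[_ _].
    case: s2 {hs hall hl hl2} => //= w t /andP[h1 h2]; rewrite -zx h1; exact: h2.
  - by rewrite hl2; rewrite last_cat /= in hl.
have xM : x \notin M by case/andP: hall => /and4P[].
set a := (y.1, x.2).
have aM : a \in M by case/andP: hpath.
have yx : y.1 != x.1.
  by apply: contraNneq xM => e; move: aM; rewrite /a e -surjective_pairing.
have xMa : x \notin M :\ a by rewrite inE negb_and xM orbT.
case/bmatchP: (bm) => H1 H2 H3.
have nh : forall z, z \in y :: s' -> z.2 != x.2.
  by move=> z zin; apply/negP => /eqP e; move/negP: H; apply; apply/hasP; exists z => //; rewrite e.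
have [M' [bm' cM']] : exists M', bmatch S Bs Js d M' /\ #|M'| = #|x |: (M :\ a)|.+1.
  apply: (IH (x |: (M :\ a)) y s') => //.
  - apply/bmatchP; split.
    + move=> z; rewrite !inE => /orP[/eqP ->|/andP[_ /H1]] //.
      by case/andP: hall => /and4P[-> -> -> _].
    + move=> k; have := card_swap (fun z : I * J => z.1 == k) aM xM.
      case: (x.1 =P k) => [<-|_]; rewrite /= ?(negbTE yx) /= => E.
        by rewrite addn0 addn1 in E; rewrite E.
      apply: leq_trans (H2 k); by rewrite -[X in (_ <= X)%N]addn0 -E leq_addr.
    + move=> j; have := card_swap (fun z : I * J => z.2 == j) aM xM.
      rewrite /= => E; apply: leq_trans (H3 j); by move/addIn: E => ->.
  - apply/allP => z zin.
    have : z \in x :: y :: s' by rewrite inE zin orbT.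
    move/(allP hall) => /and4P[-> -> -> zM] /=.
    rewrite !inE negb_or negb_and zM orbT andbT.
    by apply: contra (nh z zin) => /eqP ->.
  - case/andP: hpath => _ hp.
    apply: (sub_in_path (P := fun z : I * J => z.2 != x.2)) hp; last by apply/allP.
    move=> u w uP _ /= h; rewrite !inE h andbT orbC /=; apply/orP; left.
    by apply: contra uP => /eqP [] _ ->.
  - have lin : last y s' \in y :: s' by exact: mem_last.
    have ln := nh _ lin.
    apply/negP => /imsetP [z]; rewrite !inE => /orP[/eqP ->|/andP[_ zM]] e.
      by rewrite e eqxx in ln.
    by move/negP: hl; apply; rewrite /= e; apply/imsetP; exists z.
  - have := card_swap (fun z : I * J => z.1 == y.1) aM xM.
    rewrite /= eqxx eq_sym (negbTE yx) /= addn0 addn1 => E.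
    by rewrite E.
exists M'; split => //; rewrite cM'.
by rewrite cardsU1 xMa [in RHS](cardsD1 a) aM.
Qed.

Lemma key (I J : finType) (S : I -> {set J}) Bs Js (d : I -> nat) (M : {set I * J}) i i' j' :
  maxbm S Bs Js d M -> i \in Bs -> j' \in Js -> j' \in S i -> (0 < d i)%N ->
  ((i', j') \in M /\ (exists2 j0, j0 \in Js :\: matched M & augpath S Bs Js M i' j0))
    \/ j' \in Js :\: matched M ->
  exists j, (i, j) \in M /\ exists2 j0, j0 \in Js :\: matched M & augpath S Bs Js M i j0.
Proof.
move=> [bm bmax] iB jJ jS dpos H.
have [Hdone|Hnot] := classic ((i', j') \in M /\ i = i' /\
   (exists2 j0, j0 \in Js :\: matched M & augpath S Bs Js M i' j0)).
  case: Hdone => iM [e N]; subst i'; by exists j'.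
have Ni : exists2 j0, j0 \in Js :\: matched M & augpath S Bs Js M i j0.
  case: H => [[iM [j0 j0in [x [s [x1 xl xall xpath]]]]] | jin].
    have ne : i != i'.
      apply/negP => /eqP e; apply: Hnot; split => //; split => //; exists j0 => //.
      by exists x, s.
    have ijM : (i, j') \notin M.
      apply/negP => ijM; move/negP: ne; apply; apply/eqP.
      by have /= := bm_inj bm ijM iM erefl => -[].
    exists j0 => //; exists (i, j'), (x :: s); split => //=.
      by rewrite iB jJ jS ijM.
    by rewrite x1 iM xpath.
  have ijM : (i, j') \notin M.
    have : j' \notin matched M by move: jin; rewrite inE => /andP[].
    by apply: contra => ijM; apply/imsetP; exists (i, j').
  by exists j' => //; exists (i, j'), [::]; split => //=; rewrite iB jJ jS ijM.
case: (boolP [exists j, (i, j) \in M]) => [/existsP [j ij] | none].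
  by exists j.
exfalso.
case: Ni => j0 j0in [x [s [x1 xl xall xpath]]].
have deg0 : [set y in M | y.1 == x.1] = set0.
  apply/setP=> y; rewrite !inE; apply/negP => /andP[yM /eqP yx].
  move/negP: none; apply; apply/existsP; exists y.2; by rewrite -x1 -yx -surjective_pairing.
have l1 : (last x s).2 \notin matched M by move: j0in; rewrite inE xl => /andP[].
have l2 : (#|[set y in M | y.1 == x.1]| < d x.1)%N by rewrite deg0 cards0 x1.
have [M' [bm' cM']] := aug_grow (leqnn (size s)) bm xall xpath l1 l2.
by have := bmax M' bm'; rewrite cM' ltnn.
Qed.

Local Open Scope ring_scope.

Lemma dem_pos (R : realFieldType) (I J : finType) (S : I -> {set J}) (v b : I -> R)
  (st : state R I J) (q : R) k j :
  j \in S k -> q <= v k -> q <= bud b st k -> (0 < dem S v b st q k)%N.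
Proof.
move=> jS qv qb; rewrite /dem qv.
have h : (1 < #|S k|.+1)%N by rewrite ltnS; apply/card_gt0P; exists j.
apply: (leq_trans _ (leq_bigmax_cond (Ordinal h) _)) => //=.
by rewrite mul1r.
Qed.

Lemma paid0 (R : realFieldType) (I J : finType) (st : state R I J) k :
  (forall j q, sold st j <> Some (k, q)) -> paid st k = 0.
Proof.
move=> H; rewrite /paid big1 // => j _.
case E: (sold st j) => [[i' q]|] //.
case: (i' =P k) => // e; subst i'; by case: (H j q).
Qed.

Lemma dem_mono (R : realFieldType) (I J : finType) (S : I -> {set J}) (v b : I -> R)
  (st st' : state R I J) (q q' : R) k :
  bud b st' k = bud b st k -> q <= q' -> q' <= v k ->
  (dem S v b st q' k <= dem S v b st' q k)%N.
Proof.
move=> eb qq qv; rewrite /dem qv (le_trans qq qv).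
apply/bigmax_leqP => m hm; apply: leq_bigmax_cond.
rewrite eb; apply: le_trans hm; apply: ler_wpM2l => //; exact: ler0n.
Qed.

Lemma paid_eq (R : realFieldType) (I J : finType) (st st' : state R I J) k :
  (forall j, sold st' j = sold st j \/
     (sold st j = None /\ exists i' q, sold st' j = Some (i', q) /\ i' != k)) ->
  paid st' k = paid st k.
Proof.
move=> H; rewrite /paid; apply: eq_bigr => j _.
case: (H j) => [-> //| [-> [i' [q [-> ne]]]]].
by rewrite (negbTE ne).
Qed.

Definition Inv1 (R : realFieldType) (I J : finType) (st : state R I J) :=
  forall j : J, j \in rem st -> sold st j = None.

Definition Wp (R : realFieldType) (I J : finType) (S : I -> {set J}) (v b : I -> R) (e : R)
  (st : state R I J) :=
  forall q, pr st <= q -> q < pr st + e -> ~~ (fGbar S v b st q < fG S v b st q)%N.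

Definition Mono (R : realFieldType) (I J : finType) (S : I -> {set J}) (v b : I -> R) (e : R)
  (st : state R I J) :=
  forall j i q, sold st j = Some (i, q) -> q <= pr st \/ (q <= pr st + e /\ Wp S v b e st).

Definition StepFacts (R : realFieldType) (I J : finType) (S : I -> {set J}) (v b : I -> R) (e : R)
  (st st' : state R I J) : Prop :=
  exists P : R,
  [/\ forall j : J, sold st j != None -> sold st' j = sold st j,
      Inv1 st',
      forall j i q, sold st j = None -> sold st' j = Some (i, q) -> q = P /\ q <= v i,
      forall j i q k, sold st j = None -> sold st' j = Some (i, q) -> j \in S k -> P < v k ->
        paid st k = 0 -> (exists j2, sold st' j2 = Some (k, P))
    & (forall j0 i0 q0, sold st j0 = Some (i0, q0) -> q0 <= P) /\ Mono S v b e st'].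

Lemma procI_facts (R : realFieldType) (I J : finType) (S : I -> {set J}) (v b : I -> R) (e : R)
  (st st' : state R I J) (p : R) :
  (forall k, v k <= b k) -> Inv1 st -> Mono S v b e st -> pr st <= p ->
  procI S v b st p st' -> StepFacts S v b e st st'.
Proof.
move=> vb I1 Mo prp [lt [M [MQ [mx mxmin mxQ [HM HMQ Hsame] [Hrem Hpr]]]]].
set A := Aset S v b st p in mx mxmin mxQ HM HMQ Hsame.
set N := fun i : I => exists2 j0, j0 \in rem st :\: matched M & augpath S A (rem st) M i j0.
have bmM := mx.1; have bmQ := mxQ.1.
case/bmatchP: (bmM) => M1 _ _; case/bmatchP: (bmQ) => Q1 _ _.
have oldsame : forall j, sold st j != None -> sold st' j = sold st j.
  move=> j hj; apply: Hsame.
    move=> i ijM; have [_ jr _] := M1 _ ijM; by rewrite (I1 j jr) in hj.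
  move=> i; apply/negP => ijM; have [_ jr _] := Q1 _ ijM.
  by move: jr; rewrite inE => /andP[_ jr]; rewrite (I1 j jr) in hj.
have newsale : forall j i q, sold st j = None -> sold st' j = Some (i, q) ->
   q = p /\ ((i, j) \in M /\ N i \/ (i, j) \in MQ).
  move=> j i q hj hj'.
  have [[i0 [i0M Ni0]]|nM] := classic (exists i0, (i0, j) \in M /\ N i0).
    by move: (HM _ _ i0M Ni0); rewrite hj' => -[-> ->]; split => //; left.
  have [[i0 i0Q]|nQ] := classic (exists i0, (i0, j) \in MQ).
    by move: (HMQ _ _ i0Q); rewrite hj' => -[-> ->]; split => //; right.
  have := Hsame j (fun i0 h Ni0 => nM (ex_intro _ i0 (conj h Ni0)))
     (fun i0 => introN idP (fun h => nQ (ex_intro _ i0 h))).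
  by rewrite hj hj'.
have oldle : forall j0 i0 q0, sold st j0 = Some (i0, q0) -> q0 <= p.
  move=> j0 i0 q0 h; case: (Mo _ _ _ h) => [h1|[h1 hW]]; first exact: le_trans h1 prp.
  case: (leP (pr st + e) p) => [h2|h2]; first exact: le_trans h1 h2.
  by move: (hW p prp h2); rewrite lt.
exists p; split => //.
- by move=> j; rewrite Hrem inE => /andP[_ /eqP].
- move=> j i q hj hj'; have [-> [[iM _]|iQ]] := newsale _ _ _ hj hj'; split => //.
    have [iA _ _] := M1 _ iM; move: iA; rewrite inE => /andP[/ltW -> _] //.
  have [iA _ _] := Q1 _ iQ; move: iA; rewrite inE => /andP[/eqP -> _] //.
- move=> j i q k hj hj' jS pv pk.
  have kA : k \in A.
    rewrite inE pv /=; apply: (dem_pos jS (ltW pv)).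
    by rewrite /bud pk subr0; exact: le_trans (ltW pv) (vb k).
  have dk : (0 < dem S v b st p k)%N by move: kA; rewrite inE => /andP[].
  have [_ [H|iQ]] := newsale _ _ _ hj hj'.
    case: H => iM Ni; have [_ jr _] := M1 _ iM.
    have [j2 [k2M Nk]] := key (i' := i) mx kA jr jS dk (or_introl (conj iM Ni)).
    by exists j2; apply: HM.
  have [_ jr _] := Q1 _ iQ; have jr' : j \in rem st by move: jr; rewrite inE => /andP[].
  have [j2 [k2M Nk]] := key (i' := i) mx kA jr' jS dk (or_intror jr).
  by exists j2; apply: HM.
split => //.
- move=> j i q h; left; rewrite Hpr.
  case E: (sold st j) => [[i0 q0]|].
    rewrite oldsame in h; last by rewrite E.
    exact: oldle h.
  by have [-> _] := newsale _ _ _ E h.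
Qed.

Lemma procII_facts (R : realFieldType) (I J : finType) (S : I -> {set J}) (v b : I -> R) (e : R)
  (st st' : state R I J) (p : R) :
  0 <= e -> (forall k, v k <= b k) -> Inv1 st -> Mono S v b e st -> pr st <= p ->
  procII S v b e st p st' -> StepFacts S v b e st st'.
Proof.
move=> e0 vb I1 Mo prp [_ [M [mx HM Hsame Hrem Hpr]]].
set Ie := Iset S v b st (p + e) in mx HM Hsame Hrem.
set N := fun i : I => exists2 j0, j0 \in rem st :\: matched M & augpath S Ie (rem st) M i j0.
have bmM := mx.1; case/bmatchP: (bmM) => M1 M2 M3.
have Iev : forall i, i \in Ie -> p + e <= v i.
  by move=> i; rewrite !inE => /orP[/andP[/ltW h _]|/andP[/eqP h _]]; rewrite ?h.
have oldsame : forall j, sold st j != None -> sold st' j = sold st j.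
  move=> j hj; apply: Hsame.
  move=> i ijM; have [_ jr _] := M1 _ ijM; by rewrite (I1 j jr) in hj.
have changed : forall j, sold st' j = sold st j \/
    (sold st j = None /\ exists i0, [/\ (i0, j) \in M, N i0 & sold st' j = Some (i0, p + e)]).
  move=> j.
  have [[i0 [i0M Ni0]]|nM] := classic (exists i0, (i0, j) \in M /\ N i0).
    right; have [_ jr _] := M1 _ i0M; split; first exact: I1.
    by exists i0; split => //; apply: HM.
  left; apply: Hsame => i0 h Ni0; exact: nM (ex_intro _ i0 (conj h Ni0)).
have newsale : forall j i q, sold st j = None -> sold st' j = Some (i, q) ->
   [/\ q = p + e, (i, j) \in M & N i].
  move=> j i q hj hj'; case: (changed j) => [|[_ [i0 [i0M Ni0 h]]]].
    by rewrite hj hj'.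
  by move: h; rewrite hj' => -[-> ->].
have oldle : forall j0 i0 q0, sold st j0 = Some (i0, q0) -> q0 <= p + e.
  move=> j0 i0 q0 h; case: (Mo _ _ _ h) => [h1|[h1 _]].
    apply: (le_trans h1); apply: (le_trans prp); by rewrite lerDl.
  apply: (le_trans h1); by rewrite lerD2r.
exists (p + e); split => //.
- by move=> j; rewrite Hrem inE => /andP[_ /and3P[/eqP -> _ _]].
- move=> j i q hj hj'; have [-> iM _] := newsale _ _ _ hj hj'; split => //.
  have [iI _ _] := M1 _ iM; exact: Iev.
- move=> j i q k hj hj' jS pv pk.
  have dk : (0 < dem S v b st (p + e) k)%N.
    apply: (dem_pos jS (ltW pv)).
    by rewrite /bud pk subr0; exact: le_trans (ltW pv) (vb k).
  have kI : k \in Ie by rewrite !inE pv dk.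
  have [_ iM Ni] := newsale _ _ _ hj hj'.
  have [_ jr _] := M1 _ iM.
  have [j2 [k2M Nk]] := key (i' := i) mx kI jr jS dk (or_introl (conj iM Ni)).
  by exists j2; apply: HM.
split => //.
have Wst' : Wp S v b e st'.
  move=> q; rewrite Hpr => pq qpe; rewrite -leqNgt.
  set M0 := [set x in M | x.2 \in rem st'].
  have M0M : M0 \subset M by apply/subsetP => x; rewrite inE => /andP[].
  have deg0 : forall k, (#|[set y in M0 | y.1 == k]| <= dem S v b st' q k)%N.
    move=> k; case: (pickP (fun y => (y \in M0) && (y.1 == k))) => [y /andP[yM0 /eqP yk] | none];
      last first.
      suff -> : [set y in M0 | y.1 == k] = set0 by rewrite cards0.
      by apply/setP => y; rewrite inE none in_set0.
    move: yM0; rewrite inE => /andP[yM yr].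
    have nNk : ~ N k.
      move=> Nk; move: yr; rewrite Hrem inE => /andP[_ /and3P[/eqP h _ _]].
      by move: (HM k y.2); rewrite -yk -surjective_pairing h => /(_ yM); rewrite yk => /(_ Nk).
    have eb : bud b st' k = bud b st k.
      rewrite /bud (@paid_eq _ _ _ st st' k) // => j.
      case: (changed j) => [->|[hj [i0 [_ Ni0 h]]]]; [by left | right; split => //].
      exists i0, (p + e); split => //; apply/negP => /eqP e'; apply: nNk; by rewrite -e'.
    have [yI _ _] := M1 _ yM.
    apply: leq_trans (@dem_mono _ _ _ S v b st st' q (p + e) k eb (ltW qpe) _); last by rewrite -yk; exact: Iev.
    apply: leq_trans (M2 k); apply: subset_leq_card; apply/subsetP => x.
    by rewrite !inE => /andP[/andP[-> _] ->].
  have bm0 : bmatch S (Aset S v b st' q) (rem st') (dem S v b st' q) M0.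
    apply/bmatchP; split.
    - move=> x xM0; have := xM0; rewrite inE => /andP[xM xr].
      have [xI _ xS] := M1 _ xM; split => //.
      rewrite inE (lt_le_trans qpe (Iev _ xI)) /=.
      apply: leq_trans (deg0 x.1); apply/card_gt0P; exists x; by rewrite inE xM0 eqxx.
    - exact: deg0.
    - move=> j; apply: leq_trans (M3 j); apply: subset_leq_card; apply/subsetP => x.
      by rewrite !inE => /andP[/andP[-> _] ->].
  have c0 : #|M0| = #|rem st'|.
    rewrite (bm_card bm0); suff -> : matched M0 = rem st' by [].
    apply/setP => j; apply/imsetP/idP.
      by case=> x; rewrite inE => /andP[_ h] ->.
    move=> jr; have := jr; rewrite Hrem inE => /andP[jr0 /and3P[_ jJ _]].
    have : j \in matched M by move: jJ; rewrite inE jr0 andbT negbK.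
    case/imsetP => x xM jx; exists x => //; by rewrite inE xM -jx jr.
  apply: (@leq_trans #|rem st'|).
    rewrite /fG /msize; apply/bigmax_leqP => M' bm'; exact: bm_le bm'.
  by rewrite /fGbar /msize -c0; exact: leq_bigmax_cond bm0.
move=> j i q h; right; split => //; rewrite Hpr.
case E: (sold st j) => [[i0 q0]|].
  rewrite oldsame in h; last by rewrite E.
  exact: oldle h.
by have [-> _ _] := newsale _ _ _ E h.
Qed.

Definition Inv2 (R : realFieldType) (I J : finType) (v : I -> R) (st : state R I J) :=
  forall j i q, sold st j = Some (i, q) -> q <= v i.

Definition Good (R : realFieldType) (I J : finType) (S : I -> {set J}) (v : I -> R)
  (st : state R I J) :=
  forall j' i' p' i, sold st j' = Some (i', p') -> j' \in S i -> p' < v i ->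
    exists j q, sold st j = Some (i, q) /\ q <= p'.

Definition AllInv (R : realFieldType) (I J : finType) (S : I -> {set J}) (v b : I -> R) (e : R)
  (st : state R I J) :=
  [/\ Inv1 st, Mono S v b e st, Inv2 v st & Good S v st].

Lemma facts_inv (R : realFieldType) (I J : finType) (S : I -> {set J}) (v b : I -> R) (e : R)
  (st st' : state R I J) :
  StepFacts S v b e st st' -> AllInv S v b e st -> AllInv S v b e st'.
Proof.
move=> [P [oldsame I1' new keyp [oldle Mo']]] [I1 Mo I2 G]; split => //.
- move=> j i q h; case E: (sold st j) => [[a c]|].
    rewrite oldsame in h; last by rewrite E.
    exact: I2 h.
  by have [_ ->] := new _ _ _ E h.
- move=> j' i' p' i h jS pv; case E: (sold st j') => [[a c]|].
    rewrite oldsame in h; last by rewrite E.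
    have [j [q [hj hq]]] := G _ _ _ _ h jS pv.
    by exists j, q; rewrite oldsame hj ?E.
  have [ep _] := new _ _ _ E h; subst p'.
  have [[j0 [q0 hj0]]|none] := classic (exists j0 q0, sold st j0 = Some (i, q0)).
    exists j0, q0; split; last exact: oldle hj0.
    by rewrite oldsame hj0.
  have pk : paid st i = 0.
    apply: paid0 => j q hq; apply: none; by exists j, q.
  have [j2 h2] := keyp _ _ _ _ E h jS pv pk.
  by exists j2, P; split.
Qed.

Lemma step_inv (R : realFieldType) (I J : finType) (S : I -> {set J}) (v b : I -> R) (e : R)
  (st st' : state R I J) :
  0 <= e -> (forall k, v k <= b k) ->
  step S v b e st st' -> AllInv S v b e st -> AllInv S v b e st'.
Proof.
move=> e0 vb [_ [p [[prp _ _] H]]] A; have [I1 Mo _ _] := A; apply: facts_inv A.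
case: H => H; [exact: procI_facts vb I1 Mo prp H | exact: procII_facts e0 vb I1 Mo prp H].
Qed.

Lemma run_inv (R : realFieldType) (I J : finType) (S : I -> {set J}) (v b : I -> R) (e : R)
  (st st' : state R I J) :
  0 <= e -> (forall k, v k <= b k) ->
  run S v b e st st' -> AllInv S v b e st -> AllInv S v b e st'.
Proof.
move=> e0 vb; elim => // st1 st2 st3 hs _ IH A.
apply: IH; exact: step_inv e0 vb hs A.
Qed.

Unset Implicit Arguments.
Set Strict Implicit.

Theorem lemma6 (R : realFieldType) (I J : finType) (S : I -> {set J}) (v b : I -> R) :
  (forall i, 0 < v i) -> (forall i, 0 <= b i) -> (forall i, v i <= b i) ->
  exists2 e0 : R, 0 < e0 &
  forall e : R, 0 < e -> e < e0 ->
  forall fin : state R I J, run S v b e (init R I J) fin -> final S v b fin ->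
  forall (i : I) (pbar : R),
    (exists j, sold fin j = Some (i, pbar)) ->
    (forall j q, sold fin j = Some (i, q) -> q = pbar) ->
    forall (j' : J) (i' : I) (p' : R), sold fin j' = Some (i', p') -> p' < pbar ->
      j' \notin S i.
Proof.
move=> vpos bpos vb; exists 1; first exact: ltr01.
move=> e epos _ fin hrun _ i pbar [j hj] hall j' i' p' hj' lt.
have A0 : AllInv S v b e (init R I J) by split => // j0 i0 q0.
have [_ _ I2 G] := run_inv (ltW epos) vb hrun A0.
apply/negP => jS.
have pv : pbar <= v i := I2 _ _ _ hj.
have [j2 [q [h2 hq]]] := G _ _ _ _ hj' jS (lt_le_trans lt pv).
rewrite (hall _ _ h2) in hq.
by move: (lt_le_trans lt hq); rewrite ltxx.
Qed.
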